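(* For any $1\leq j\leq i<n$ and $r\in\mathbb{Z}$: $$E^{(r)}_{j,i+1}=(-1)^{\delta_{r<0}}v^{-jr}\,\Upsilon^{-1}(\tilde e^{(r)}_{j,i+1}),\qquad F^{(r)}_{i+1,j}=(-1)^{\delta_{r>0}}v^{-jr}\,\Upsilon^{-1}(\tilde f^{(r)}_{i+1,j}),$$ where $\delta_{r<0}$ (resp. $\delta_{r>0}$) equals $1$ if $r<0$ (resp. $r>0$) and $0$ otherwise.
   Context: Let $v$ be a formal variable, $(c_{ii'})$ the Cartan matrix of $\mathfrak{sl}_n$, $[a,b]_x=ab-x\,ba$, $\delta(z)=\sum_{r\in\mathbb{Z}}z^r$. $U_v(L\mathfrak{gl}_n)$ is the $\mathbb{C}(v)$-algebra generated by $\{e_{i,r},f_{i,r}\}_{1\leq i<n}^{r\in\mathbb{Z}}\cup\{\varphi^+_{j,s},\varphi^-_{j,-s}\}_{1\leq j\leq n}^{s\in\mathbb{N}}$, with $e_i(z)=\sum_re_{i,r}z^{-r}$, $f_i(z)=\sum_rf_{i,r}z^{-r}$, $\varphi^\pm_j(z)=\sum_{s\geq0}\varphi^\pm_{j,\pm s}z^{\mp s}$, $\psi^\pm_i(z)=(\varphi^\pm_i(z))^{-1}\varphi^\pm_{i+1}(v^{-1}z)$, and relations: $[\varphi^\epsilon_j(z),\varphi^{\epsilon'}_{j'}(w)]=0$, $\varphi^\pm_{j,0}\varphi^\mp_{j,0}=1$; $(z-v^{c_{ii'}}w)e_i(z)e_{i'}(w)=(v^{c_{ii'}}z-w)e_{i'}(w)e_i(z)$;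 $(v^{c_{ii'}}z-w)f_i(z)f_{i'}(w)=(z-v^{c_{ii'}}w)f_{i'}(w)f_i(z)$; $(vz-v^{-1}w)^{\delta_{ji}}(z-vw)^{\delta_{j,i+1}}\varphi^\epsilon_j(z)e_i(w)=(z-w)^{\delta_{ji}}(vz-w)^{\delta_{j,i+1}}e_i(w)\varphi^\epsilon_j(z)$; $(z-w)^{\delta_{ji}}(vz-w)^{\delta_{j,i+1}}\varphi^\epsilon_j(z)f_i(w)=(vz-v^{-1}w)^{\delta_{ji}}(z-vw)^{\delta_{j,i+1}}f_i(w)\varphi^\epsilon_j(z)$; $[e_i(z),f_{i'}(w)]=\frac{\delta_{ii'}}{v-v^{-1}}\delta(z/w)(\psi^+_i(z)-\psi^-_i(z))$; $e_i,e_{i'}$ (and $f_i,f_{i'}$) commute if $c_{ii'}=0$; $[e_i(z_1),[e_i(z_2),e_{i'}(w)]_{v^{-1}}]_v+(z_1\leftrightarrow z_2)=0$ and likewise for $f$ if $c_{ii'}=-1$. Half-currents $e^+_i(z)=\sum_{r\geq0}e_{i,r}z^{-r}$, $e^-_i(z)=-\sum_{r<0}e_{i,r}z^{-r}$, $f^+_i(z)=\sum_{r>0}f_{i,r}z^{-r}$, $f^-_i(z)=-\sum_{r\leq0}f_{i,r}z^{-r}$. $E^{(r)}_{j,i+1}=(v-v^{-1})[e_{i,0},\cdots,[e_{j+1,0},e_{j,r}]_{v^{-1}}\cdots]_{v^{-1}}$, $F^{(r)}_{i+1,j}=(v^{-1}-v)[\cdots[f_{j,r},f_{j+1,0}]_v,\cdots,f_{i,0}]_v$.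 $R_{\mathrm{trig}}(z,w)=(vz-v^{-1}w)\sum_iE_{ii}\otimes E_{ii}+(z-w)\sum_{i\neq j}E_{ii}\otimes E_{jj}+(v-v^{-1})z\sum_{i<j}E_{ij}\otimes E_{ji}+(v-v^{-1})w\sum_{i>j}E_{ij}\otimes E_{ji}$; $U^{\mathrm{rtt}}_v(L\mathfrak{gl}_n)$ is the $\mathbb{C}(v)$-algebra generated by $\{t^\pm_{ij}[\pm r]\}^{r\in\mathbb{N}}$ with relations $t^\pm_{ii}[0]t^\mp_{ii}[0]=1$, $t^+_{ij}[0]=t^-_{ji}[0]=0$ ($j<i$), $R_{\mathrm{trig}}(z,w)T^\epsilon_1(z)T^{\epsilon'}_2(w)=T^{\epsilon'}_2(w)T^\epsilon_1(z)R_{\mathrm{trig}}(z,w)$ for $(\epsilon,\epsilon')\in\{(+,+),(-,-),(-,+)\}$, $T^\pm(z)=\sum t^\pm_{ij}(z)\otimes E_{ij}$, $t^\pm_{ij}(z)=\sum_{r\geq0}t^\pm_{ij}[\pm r]z^{\mp r}$. Gauss decomposition $T^\pm(z)=\tilde F^\pm(z)\tilde G^\pm(z)\tilde E^\pm(z)$ ($\tilde F^\pm$ lower unitriangular with entries $\tilde f^\pm_{ij}(z)$, $\tilde G^\pm=\operatorname{diag}(\tilde g^\pm_i(z))$, $\tilde E^\pm$ upper unitriangular with entries $\tilde e^\pm_{ij}(z)$), with modes $\tilde e^+_{ij}(z)=\sum_{r\geq0}\tilde e^{(r)}_{ij}z^{-r}$, $\tilde e^-_{ij}(z)=\sum_{r<0}\tilde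 e^{(r)}_{ij}z^{-r}$, $\tilde f^+_{ij}(z)=\sum_{r>0}\tilde f^{(r)}_{ij}z^{-r}$, $\tilde f^-_{ij}(z)=\sum_{r\leq0}\tilde f^{(r)}_{ij}z^{-r}$. $\Upsilon\colon U_v(L\mathfrak{gl}_n)\xrightarrow{\sim}U^{\mathrm{rtt}}_v(L\mathfrak{gl}_n)$ is the $\mathbb{C}(v)$-algebra isomorphism given by $e^\pm_i(z)\mapsto\frac{\tilde e^\pm_{i,i+1}(v^iz)}{v-v^{-1}}$, $f^\pm_i(z)\mapsto\frac{\tilde f^\pm_{i+1,i}(v^iz)}{v-v^{-1}}$, $\varphi^\pm_j(z)\mapsto\tilde g^\pm_j(v^jz)$. *)

(* Defs.v *)
(* Base field C(v) = {fraction {poly C}}, C = R[i] with R the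
   Stdlib reals (a real closed field via Rstruct), v = the indeterminate 'X. *)
From HB Require Import structures.
From mathcomp Require Import all_boot all_order all_algebra.
From mathcomp Require Import Rstruct.
From mathcomp.real_closed Require Import complex.
From mathcomp Require Import fraction.
Set Implicit Arguments. Unset Strict Implicit. Unset Printing Implicit Defensive.
Import Order.TTheory GRing.Theory Num.Theory.
Local Open Scope ring_scope.

Definition Cx : fieldType := complex Rdefinitions.R.
Definition Kv : fieldType := {fraction {poly Cx}}.
Definition v : Kv := tofrac ('X : {poly Cx}).

(* All gl_n indices below are 1-based naturals, as in the paper. *)

Definition qcomm (A : lalgType Kv) (x : Kv) (a b : A) : A := a * b - x *: (b * a).

Fixpoint Enest (A : lalgType Kv) (e : nat -> int -> A) (j : nat) (r : int) (d : nat) : A :=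
  match d with
  | 0 => e j r
  | d'.+1 => qcomm v^-1 (e (j + d)%N 0) (Enest e j r d')
  end.
Definition Ecal (A : lalgType Kv) (e : nat -> int -> A) (j i : nat) (r : int) : A :=
  (v - v^-1) *: Enest e j r (i - j).

Fixpoint Fnest (A : lalgType Kv) (f : nat -> int -> A) (j : nat) (r : int) (d : nat) : A :=
  match d with
  | 0 => f j r
  | d'.+1 => qcomm v (Fnest f j r d') (f (j + d)%N 0)
  end.
Definition Fcal (A : lalgType Kv) (f : nat -> int -> A) (i j : nat) (r : int) : A :=
  (v^-1 - v) *: Fnest f j r (i - j).

(* pm = true for "+", false for "-" *)

(* half-currents: e^+_i(z) = sum_{r>=0} e_{i,r} z^{-r}, e^-_i(z) = - sum_{r<0} e_{i,r} z^{-r} *)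
Definition e_half (A : lalgType Kv) (pm : bool) (e : nat -> int -> A) (i : nat) (m : int) : A :=
  if pm then (if m <= 0 then e i (- m) else 0) else (if 0 < m then - e i (- m) else 0).
(* f^+_i(z) = sum_{r>0} f_{i,r} z^{-r}, f^-_i(z) = - sum_{r<=0} f_{i,r} z^{-r} *)
Definition f_half (A : lalgType Kv) (pm : bool) (f : nat -> int -> A) (i : nat) (m : int) : A :=
  if pm then (if m < 0 then f i (- m) else 0) else (if 0 <= m then - f i (- m) else 0).
(* phi^+_j(z) = sum_{s>=0} phi^+_{j,s} z^{-s}, phi^-_j(z) = sum_{s>=0} phi^-_{j,-s} z^{s};
   php j s = phi^+_{j,s}, phm j s = phi^-_{j,-s} *)
Definition phi_half (A : lalgType Kv) (pm : bool) (php phm : nat -> nat -> A) (j : nat) (m : int) : A :=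
  if pm then (if m <= 0 then php j `|m|%N else 0) else (if 0 <= m then phm j `|m|%N else 0).

(* t^pm_{ij}(z); tp i j s = t^+_{ij}[s], tm i j s = t^-_{ij}[-s] *)
Definition T_coef (B : lalgType Kv) (pm : bool) (tp tm : nat -> nat -> nat -> B)
  (i j : nat) (m : int) : B :=
  if pm then (if m <= 0 then tp i j `|m|%N else 0) else (if 0 <= m then tm i j `|m|%N else 0).

(* Gauss entries; ee i j r = \tilde e^{(r)}_{ij}, ff i j r = \tilde f^{(r)}_{ij},
   gp i s, gm i s = modes of \tilde g^+_i (z^{-s}) and \tilde g^-_i (z^{s}) *)
Definition et_coef (B : lalgType Kv) (pm : bool) (ee : nat -> nat -> int -> B)
  (i j : nat) (m : int) : B :=
  if pm then (if m <= 0 then ee i j (- m) else 0) else (if 0 < m then ee i j (- m) else 0).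
Definition ft_coef (B : lalgType Kv) (pm : bool) (ff : nat -> nat -> int -> B)
  (i j : nat) (m : int) : B :=
  if pm then (if m < 0 then ff i j (- m) else 0) else (if 0 <= m then ff i j (- m) else 0).
Definition gt_coef (B : lalgType Kv) (pm : bool) (gp gm : nat -> nat -> B)
  (i : nat) (m : int) : B :=
  if pm then (if m <= 0 then gp i `|m|%N else 0) else (if 0 <= m then gm i `|m|%N else 0).

Definition Emat_coef (B : lalgType Kv) (pm : bool) (ee : nat -> nat -> int -> B)
  (i j : nat) (m : int) : B :=
  if i == j then (m == 0)%:R else if (i < j)%N then et_coef pm ee i j m else 0.
Definition Fmat_coef (B : lalgType Kv) (pm : bool) (ff : nat -> nat -> int -> B)
  (i j : nat) (m : int) : B :=
  if i == j then (m == 0)%:R else if (j < i)%N then ft_coef pm ff i j m else 0.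

(* coefficient of z^m in the product of two one-variable series that are both
   supported in nonpositive degrees, or both in nonnegative degrees
   (all nonzero terms have |m1| <= |m|) *)
Definition sconv (B : lalgType Kv) (a b : int -> B) (m : int) : B :=
  \sum_(0 <= k < (2 * `|m|).+1) a (k%:Z - `|m|%:Z) * b (m - (k%:Z - `|m|%:Z)).

Definition gauss_decomp (B : lalgType Kv) (n : nat) (tp tm : nat -> nat -> nat -> B)
  (ee ff : nat -> nat -> int -> B) (gp gm : nat -> nat -> B) : Prop :=
  forall (pm : bool) (i j : nat), (1 <= i <= n)%N -> (1 <= j <= n)%N -> forall m : int,
    T_coef pm tp tm i j m =
    \sum_(1 <= k < n.+1)
       sconv (sconv (Fmat_coef pm ff i k) (gt_coef pm gp gm k)) (Emat_coef pm ee k j) m.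

(* R_trig(z,w) = sum_{i,k,a,b} (Rz i k a b * z + Rw i k a b * w) E_{ia} (x) E_{kb} *)
Definition Rz (i k a b : nat) : Kv :=
  if i == k then (if (a == i) && (b == i) then v else 0)
  else (if (a == i) && (b == k) then 1 else 0)
     + (if [&& a == k, b == i & (i < k)%N] then v - v^-1 else 0).
Definition Rw (i k a b : nat) : Kv :=
  if i == k then (if (a == i) && (b == i) then - v^-1 else 0)
  else (if (a == i) && (b == k) then -1 else 0)
     + (if [&& a == k, b == i & (k < i)%N] then v - v^-1 else 0).

(* R(z,w) T^e_1(z) T^e'_2(w) = T^e'_2(w) T^e_1(z) R(z,w): the coefficient of
   z^m w^p in the (E_{ij} (x) E_{kl})-component *)
Definition RTT_rel (B : lalgType Kv) (n : nat) (e e' : bool)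
  (tp tm : nat -> nat -> nat -> B) : Prop :=
  forall i j k l : nat, (1 <= i <= n)%N -> (1 <= j <= n)%N ->
  (1 <= k <= n)%N -> (1 <= l <= n)%N -> forall m p : int,
  \sum_(1 <= a < n.+1) \sum_(1 <= b < n.+1)
     (Rz i k a b *: (T_coef e tp tm a j (m - 1) * T_coef e' tp tm b l p)
      + Rw i k a b *: (T_coef e tp tm a j m * T_coef e' tp tm b l (p - 1)))
  =
  \sum_(1 <= a < n.+1) \sum_(1 <= b < n.+1)
     (Rz a b j l *: (T_coef e' tp tm k b p * T_coef e tp tm i a (m - 1))
      + Rw a b j l *: (T_coef e' tp tm k b (p - 1) * T_coef e tp tm i a m)).

Definition rtt_relations (B : lalgType Kv) (n : nat) (tp tm : nat -> nat -> nat -> B) : Prop :=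
  [/\ forall i, (1 <= i <= n)%N -> tp i i 0%N * tm i i 0%N = 1 /\ tm i i 0%N * tp i i 0%N = 1,
      forall i j, (1 <= j)%N -> (j < i)%N -> (i <= n)%N -> tp i j 0%N = 0 /\ tm j i 0%N = 0,
      RTT_rel n true true tp tm,
      RTT_rel n false false tp tm &
      RTT_rel n false true tp tm].

(* Main.v *)
Require Import Defs.
From HB Require Import structures.
From mathcomp Require Import all_boot all_order all_algebra.
From mathcomp Require Import Rstruct.
From mathcomp.real_closed Require Import complex.
From mathcomp Require Import fraction.
From mathcomp Require Import zify ring.
Import Order.TTheory GRing.Theory Num.Theory.
Local Open Scope ring_scope.

Set Implicit Arguments. Unset Strict Implicit. Unset Printing Implicit Defensive.

Lemma v_neq0 : v != 0.
Proof. by rewrite /v tofrac_eq0 polyX_eq0. Qed.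

Lemma vv_neq0 : v - v^-1 != 0.
Proof.
apply/negP => /eqP h.
have h2 : v * v = 1.
  by move/eqP: h; rewrite subr_eq0 => /eqP h; rewrite {1}h mulVf // v_neq0.
have : tofrac ('X * 'X : {poly Cx}) = tofrac 1 by rewrite rmorphM rmorph1; exact: h2.
move/eqP; rewrite tofrac_eq => /eqP /(congr1 (fun p : {poly Cx} => size p)).
by rewrite -expr2 size_polyXn size_poly1.
Qed.


Set Implicit Arguments. Unset Strict Implicit. Unset Printing Implicit Defensive.

Definition idx (pm : bool) (N : nat) : int := if pm then - N%:Z else N%:Z.
Definition ser (B : algType Kv) (pm : bool) (a : int -> B) : nat -> B := fun N => a (idx pm N).
Definition conv (B : algType Kv) (a b : nat -> B) (N : nat) : B :=
  \sum_(p < N.+1) a p * b (N - p)%N.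
Definition supp (B : algType Kv) (pm : bool) (a : int -> B) : Prop :=
  forall m : int, (if pm then 0 < m else m < 0) -> a m = 0.

Lemma big_shift (B : algType Kv) (N M : nat) (F : nat -> B) :
  \sum_(N <= i < M) F i = \sum_(i < M - N) F (i + N)%N.
Proof. by rewrite -{1}(add0n N) big_addn big_mkord. Qed.

Lemma absz_idx pm N : `|idx pm N|%N = N.
Proof. by case: pm; rewrite /idx ?abszN. Qed.

Lemma sconv_ser (B : algType Kv) pm (a b : int -> B) N :
  supp pm a -> supp pm b -> sconv a b (idx pm N) = conv (ser pm a) (ser pm b) N.
Proof.
move=> Ha Hb; rewrite /sconv absz_idx /conv.
case: pm Ha Hb => Ha Hb.
- rewrite (big_cat_nat (n := N.+1)) //=; last by lia.
  rewrite [X in _ + X]big1_seq ?addr0; last first.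
    move=> k; rewrite mem_iota => /andP[h1 h2].
    by rewrite Ha ?mul0r //; lia.
  rewrite big_mkord (reindex_inj rev_ord_inj) /=.
apply: eq_bigr => k _.
  rewrite /ser /idx; congr (a _ * b _); have := ltn_ord k; lia.
- rewrite (big_cat_nat (n := N)) //=; last by lia.
  rewrite big1_seq ?add0r; last first.
    move=> k; rewrite mem_iota => /andP[h1 h2].
    by rewrite Ha ?mul0r //; lia.
  rewrite big_shift; have -> : ((2 * N).+1 - N = N.+1)%N by lia.
  apply: eq_bigr => k _.
  rewrite /ser /idx; congr (a _ * b _); have := ltn_ord k; lia.
Qed.

Lemma supp_sconv (B : algType Kv) pm (a b : int -> B) :
  supp pm a -> supp pm b -> supp pm (sconv a b).
Proof.
move=> Ha Hb m Hm; rewrite /sconv big1_seq // => k; rewrite mem_iota => /andP[h1 h2].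
case: pm Ha Hb Hm => Ha Hb Hm.
- have [hk|hk] := leqP k `|m|%N.
  + by rewrite Hb ?mulr0 //; lia.
  + by rewrite Ha ?mul0r //; lia.
- have [hk|hk] := leqP `|m|%N k.
  + by rewrite Hb ?mulr0 //; lia.
  + by rewrite Ha ?mul0r //; lia.
Qed.


Set Implicit Arguments. Unset Strict Implicit. Unset Printing Implicit Defensive.

Definition dl (B : algType Kv) : nat -> B := fun p => (p == 0)%:R.

Lemma conv_dl (B : algType Kv) (a : nat -> B) N : conv (@dl B) a N = a N.
Proof.
rewrite /conv big_ord_recl /dl /= mul1r subn0 big1 ?addr0 // => i _.
by rewrite mul0r.
Qed.

Lemma conv_dr (B : algType Kv) (a : nat -> B) N : conv a (@dl B) N = a N.
Proof.
rewrite /conv big_ord_recr /dl /= subnn eqxx mulr1 big1 ?add0r // => i _.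
have := ltn_ord i; rewrite /= => h.
have -> : (N - i == 0)%N = false by apply/negbTE; lia.
by rewrite mulr0.
Qed.

Lemma conv_ext (B : algType Kv) (a a' b b' : nat -> B) N :
  (forall p, a p = a' p) -> (forall p, b p = b' p) -> conv a b N = conv a' b' N.
Proof. by move=> ha hb; apply: eq_bigr => p _; rewrite ha hb. Qed.

Lemma conv0l (B : algType Kv) (a b : nat -> B) N :
  (forall p, a p = 0) -> conv a b N = 0.
Proof. by move=> ha; rewrite /conv big1 // => p _; rewrite ha mul0r. Qed.

Lemma conv0r (B : algType Kv) (a b : nat -> B) N :
  (forall p, b p = 0) -> conv a b N = 0.
Proof. by move=> hb; rewrite /conv big1 // => p _; rewrite hb mulr0. Qed.

Lemma convD_r (B : algType Kv) (a b b' : nat -> B) N :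
  conv a (fun p => b p + b' p) N = conv a b N + conv a b' N.
Proof. by rewrite /conv -big_split; apply: eq_bigr => p _; rewrite mulrDr. Qed.

Lemma convD_l (B : algType Kv) (a a' b : nat -> B) N :
  conv (fun p => a p + a' p) b N = conv a b N + conv a' b N.
Proof. by rewrite /conv -big_split; apply: eq_bigr => p _; rewrite mulrDl. Qed.

Lemma conv_opl (B : algType Kv) (c : B) (l : Kv) (a b : nat -> B) N :
  (forall p, c * a p = a p * c) ->
  c * conv a b N - l *: (conv a b N * c) =
  conv a (fun p => c * b p - l *: (b p * c)) N.
Proof.
move=> hc; rewrite /conv mulr_sumr mulr_suml scaler_sumr -sumrB.
apply: eq_bigr => p _; rewrite mulrBr -scalerAr !mulrA hc.
by [].
Qed.

Lemma conv_opr (B : algType Kv) (c : B) (l : Kv) (a b : nat -> B) N :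
  (forall p, c * b p = b p * c) ->
  conv a b N * c - l *: (c * conv a b N) =
  conv (fun p => a p * c - l *: (c * a p)) b N.
Proof.
move=> hc; rewrite /conv mulr_sumr mulr_suml scaler_sumr -sumrB.
apply: eq_bigr => p _; rewrite mulrBl -scalerAl -!mulrA hc.
by [].
Qed.

Lemma conv_der (B : algType Kv) (c : B) (a b : nat -> B) N :
  c * conv a b N - conv a b N * c =
  conv (fun p => c * a p - a p * c) b N + conv a (fun p => c * b p - b p * c) N.
Proof.
rewrite /conv mulr_sumr mulr_suml -sumrB -big_split; apply: eq_bigr => p _.
rewrite mulrBl mulrBr !mulrA /=.
by rewrite addrA subrK.
Qed.

Lemma conv_cancel_l (B : algType Kv) (a b : nat -> B) (u : B) :
  u * a 0%N = 1 -> (forall N, conv a b N = 0) -> forall N, b N = 0.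
Proof.
move=> hu hc N; elim: N {-2}N (leqnn N) => [|M IH] N hN.
  have := hc 0%N; rewrite /conv big_ord_recl big_ord0 addr0 /=.
  have -> : N = 0%N by lia.
  by move=> h; rewrite -[b 0%N]mul1r -hu -mulrA h mulr0.
have := hc N; rewrite /conv big_ord_recl /= subn0 big1 ?addr0.
  by move=> h; rewrite -[b N]mul1r -hu -mulrA h mulr0.
move=> i _; rewrite IH ?mulr0 //; have := ltn_ord i; rewrite /bump /=; lia.
Qed.

Lemma conv_cancel_r (B : algType Kv) (a b : nat -> B) (u : B) :
  a 0%N * u = 1 -> (forall N, conv b a N = 0) -> forall N, b N = 0.
Proof.
move=> hu hc N; elim: N {-2}N (leqnn N) => [|M IH] N hN.
  have := hc 0%N; rewrite /conv big_ord_recl big_ord0 addr0 /=.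
  have -> : N = 0%N by lia.
  by move=> h; rewrite -[b 0%N]mulr1 -hu mulrA h mul0r.
have := hc N; rewrite /conv big_ord_recr /= subnn big1 ?add0r.
  by move=> h; rewrite -[b N]mulr1 -hu mulrA h mul0r.
move=> i _; rewrite IH ?mul0r //; have := ltn_ord i; rewrite /=; lia.
Qed.

Lemma convB_r (B : algType Kv) (a b b' : nat -> B) N :
  conv a b N - conv a b' N = conv a (fun p => b p - b' p) N.
Proof. by rewrite /conv -sumrB; apply: eq_bigr => p _; rewrite mulrBr. Qed.

Lemma convB_l (B : algType Kv) (a a' b : nat -> B) N :
  conv a b N - conv a' b N = conv (fun p => a p - a' p) b N.
Proof. by rewrite /conv -sumrB; apply: eq_bigr => p _; rewrite mulrBl. Qed.

Lemma convZ_r (B : algType Kv) (k : Kv) (a b : nat -> B) N :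
  k *: conv a b N = conv a (fun p => k *: b p) N.
Proof. by rewrite /conv scaler_sumr; apply: eq_bigr => p _; rewrite scalerAr. Qed.

Lemma convZ_l (B : algType Kv) (k : Kv) (a b : nat -> B) N :
  k *: conv a b N = conv (fun p => k *: a p) b N.
Proof. by rewrite /conv scaler_sumr; apply: eq_bigr => p _; rewrite scalerAl. Qed.


Set Implicit Arguments. Unset Strict Implicit. Unset Printing Implicit Defensive.

Ltac brute := repeat (match goal with |- context [?x == ?y] => let H := fresh in case: (x =P y) => H; [subst|] end);
  rewrite /= ?ltnn ?andbF ?andbT ?addr0 ?add0r //=; try congruence.

Lemma Rw_eq1 i k a b : Rw i k a b =
  (if [&& a == i, b == k & true] then (if i == k then - v^-1 else -1) else 0)
  + (if [&& a == k, b == i & (k < i)%N] then v - v^-1 else 0).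
Proof. rewrite /Rw; brute. Qed.

Lemma Rw_eq2 a b s t : Rw a b s t =
  (if [&& a == s, b == t & true] then (if s == t then - v^-1 else -1) else 0)
  + (if [&& a == t, b == s & (s < t)%N] then v - v^-1 else 0).
Proof. rewrite /Rw; brute. Qed.

Lemma sum_delta1 (B : algType Kv) n p (F : nat -> B) :
  (1 <= p <= n)%N ->
  \sum_(1 <= a < n.+1) (if a == p then F a else 0) = F p.
Proof.
move=> hp; rewrite (bigD1_seq p) /= ?eqxx ?mem_iota ?iota_uniq //; last by lia.
rewrite big1_seq ?addr0 // => a /andP[ha _]; by rewrite (negbTE ha).
Qed.

Lemma sum_delta2 (B : algType Kv) n p q (P : bool) (c : Kv) (M : nat -> nat -> B) :
  (1 <= p <= n)%N -> (1 <= q <= n)%N ->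
  \sum_(1 <= a < n.+1) \sum_(1 <= b < n.+1)
     ((if [&& a == p, b == q & P] then c else 0) *: M a b)
  = if P then c *: M p q else 0.
Proof.
move=> hp hq.
rewrite (eq_bigr (fun a => if a == p then
   \sum_(1 <= b < n.+1) (if b == q then (if P then c *: M p b else 0) else 0) else 0)).
  rewrite sum_delta1 // sum_delta1 //.
move=> a _; case: (a =P p) => [->|hap].
  apply: eq_bigr => b _; case: (b =P q) => [->|] /=; case: P => //=; by rewrite scale0r.
by rewrite big1 // => b _; rewrite /= scale0r.
Qed.

Lemma sum_Rw1 (B : algType Kv) n x y (M : nat -> nat -> B) :
  (1 <= x <= n)%N -> (1 <= y <= n)%N ->
  \sum_(1 <= a < n.+1) \sum_(1 <= b < n.+1) (Rw x y a b *: M a b)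
  = (if x == y then - v^-1 else -1) *: M x y
    + (if (y < x)%N then (v - v^-1) *: M y x else 0).
Proof.
move=> hx hy.
rewrite (eq_bigr (fun a => \sum_(1 <= b < n.+1)
   ((if [&& a == x, b == y & true] then (if x == y then - v^-1 else -1) else 0) *: M a b)
 + \sum_(1 <= b < n.+1)
   ((if [&& a == y, b == x & (y < x)%N] then v - v^-1 else 0) *: M a b))).
  by rewrite big_split /= !sum_delta2.
by move=> a _; rewrite -big_split; apply: eq_bigr => b _; rewrite Rw_eq1 scalerDl.
Qed.

Lemma sum_Rw2 (B : algType Kv) n s t (M : nat -> nat -> B) :
  (1 <= s <= n)%N -> (1 <= t <= n)%N ->
  \sum_(1 <= a < n.+1) \sum_(1 <= b < n.+1) (Rw a b s t *: M a b)
  = (if s == t then - v^-1 else -1) *: M s t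
    + (if (s < t)%N then (v - v^-1) *: M t s else 0).
Proof.
move=> hx hy.
rewrite (eq_bigr (fun a => \sum_(1 <= b < n.+1)
   ((if [&& a == s, b == t & true] then (if s == t then - v^-1 else -1) else 0) *: M a b)
 + \sum_(1 <= b < n.+1)
   ((if [&& a == t, b == s & (s < t)%N] then v - v^-1 else 0) *: M a b))).
  by rewrite big_split /= !sum_delta2.
by move=> a _; rewrite -big_split; apply: eq_bigr => b _; rewrite Rw_eq2 scalerDl.
Qed.

Lemma RELE (B : algType Kv) n pm (tp tm : nat -> nat -> nat -> B) :
  RTT_rel n pm true tp tm ->
  forall x y s t, (1 <= x <= n)%N -> (1 <= y <= n)%N -> (1 <= s <= n)%N -> (1 <= t <= n)%N ->
  forall m : int,
  (if x == y then - v^-1 else -1) *: (T_coef pm tp tm x s m * tp y t 0%N)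
    + (if (y < x)%N then (v - v^-1) *: (T_coef pm tp tm y s m * tp x t 0%N) else 0)
  = (if s == t then - v^-1 else -1) *: (tp y t 0%N * T_coef pm tp tm x s m)
    + (if (s < t)%N then (v - v^-1) *: (tp y s 0%N * T_coef pm tp tm x t m) else 0).
Proof.
move=> H x y s t hx hy hs ht m.
have := H x s y t hx hs hy ht m 1.
rewrite (eq_bigr (fun a => \sum_(1 <= b < n.+1) (Rw x y a b *: (T_coef pm tp tm a s m * tp b t 0%N)))); last first.
  move=> a _; apply: eq_bigr => b _.
  by rewrite /T_coef /= mulr0 scaler0 add0r.
rewrite [X in _ = X -> _](eq_bigr (fun a => \sum_(1 <= b < n.+1) (Rw a b s t *: (tp y b 0%N * T_coef pm tp tm x a m)))); last first.
  move=> a _; apply: eq_bigr => b _.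
  by rewrite /T_coef /= mul0r scaler0 add0r.
by rewrite sum_Rw1 // sum_Rw2.
Qed.

Lemma RELF (B : algType Kv) n pm (tp tm : nat -> nat -> nat -> B) :
  RTT_rel n false pm tp tm ->
  forall x y s t, (1 <= x <= n)%N -> (1 <= y <= n)%N -> (1 <= s <= n)%N -> (1 <= t <= n)%N ->
  forall m : int,
  (if x == y then - v^-1 else -1) *: (tm x s 0%N * T_coef pm tp tm y t m)
    + (if (y < x)%N then (v - v^-1) *: (tm y s 0%N * T_coef pm tp tm x t m) else 0)
  = (if s == t then - v^-1 else -1) *: (T_coef pm tp tm y t m * tm x s 0%N)
    + (if (s < t)%N then (v - v^-1) *: (T_coef pm tp tm y s m * tm x t 0%N) else 0).
Proof.
move=> H x y s t hx hy hs ht m.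
have := H x s y t hx hs hy ht 0 (m + 1).
rewrite (eq_bigr (fun a => \sum_(1 <= b < n.+1) (Rw x y a b *: (tm a s 0%N * T_coef pm tp tm b t m)))); last first.
  move=> a _; apply: eq_bigr => b _.
  by rewrite {1}/T_coef /= mul0r scaler0 add0r addrK.
rewrite [X in _ = X -> _](eq_bigr (fun a => \sum_(1 <= b < n.+1) (Rw a b s t *: (T_coef pm tp tm y b m * tm x a 0%N)))); last first.
  move=> a _; apply: eq_bigr => b _.
  by rewrite [T_coef false _ _ _ _ (0 - 1)]/T_coef /= mulr0 scaler0 add0r addrK.
by rewrite sum_Rw1 // sum_Rw2.
Qed.


Set Implicit Arguments. Unset Strict Implicit. Unset Printing Implicit Defensive.

Definition comm (B : algType Kv) (c y : B) := c * y = y * c.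

Lemma commE (B : algType Kv) (c y : B) : comm c y <-> c * y - y * c = 0.
Proof.
rewrite /comm; split => [->|h]; first by rewrite subrr.
by apply/eqP; rewrite -subr_eq0 h.
Qed.

Lemma conv_comm (B : algType Kv) (c : B) a b N :
  (forall p, comm c (a p)) -> (forall p, comm c (b p)) -> comm c (conv a b N).
Proof.
move=> ha hb; apply/commE; rewrite conv_der.
rewrite conv0l ?conv0r ?addr0 // => p; exact/commE.
Qed.

Lemma sum_only (B : algType Kv) n m (F : nat -> B) :
  (1 <= m <= n)%N -> (forall k, (1 <= k <= n)%N -> k != m -> F k = 0) ->
  \sum_(1 <= k < n.+1) F k = F m.
Proof.
move=> hm h; rewrite (bigD1_seq m) /= ?mem_iota ?iota_uniq //; last by lia.
rewrite big1_seq ?addr0 // => k /andP[hk]; rewrite mem_iota => hk'.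
apply: h => //; lia.
Qed.

Lemma stepC (B : algType Kv) n i (T F E : nat -> nat -> nat -> B) (G : nat -> nat -> B) (c : B) :
  (forall x s, (1 <= x <= n)%N -> (1 <= s <= n)%N -> forall N,
     T x s N = \sum_(1 <= k < n.+1) conv (conv (F x k) (G k)) (E k s) N) ->
  (forall x N, F x x N = dl B N) -> (forall x k N, (x < k)%N -> F x k N = 0) ->
  (forall x N, E x x N = dl B N) -> (forall k s N, (s < k)%N -> E k s N = 0) ->
  (forall k, (1 <= k <= n)%N -> exists u, u * G k 0%N = 1 /\ G k 0%N * u = 1) ->
  (i <= n.+1)%N ->
  (forall x s, (1 <= x < i)%N -> (1 <= s < i)%N -> forall N, comm c (T x s N)) ->
  forall x s, (1 <= x < i)%N -> (1 <= s < i)%N ->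
    (forall N, comm c (F x s N)) /\ (forall N, comm c (E x s N)) /\ (x = s -> forall N, comm c (G x N)).
Proof.
move=> hT hFd hF0 hEd hE0 hG hi hc.
have dlc : forall N, comm c (dl B N) by move=> N; rewrite /comm /dl; case: (N == 0)%N; rewrite ?mulr1 ?mul1r ?mulr0 ?mul0r.
have zc : comm c 0 by rewrite /comm mulr0 mul0r.
suff: forall M x s, (x + s <= M)%N -> (1 <= x < i)%N -> (1 <= s < i)%N ->
    (forall N, comm c (F x s N)) /\ (forall N, comm c (E x s N)) /\ (x = s -> forall N, comm c (G x N)).
  by move=> H x s; apply: (H (x + s)%N).
elim=> [|M IH] x s hM hx hs; first by lia.
set m := minn x s.
have hterm : forall k, (1 <= k <= n)%N -> k != m -> forall N,
    comm c (conv (conv (F x k) (G k)) (E k s) N).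
  move=> k hk hkm N.
  have [hkx|hkx] := ltnP x k.
    by rewrite conv0l // => p; rewrite conv0l // => q; rewrite hF0.
  have [hks|hks] := ltnP s k.
    by rewrite conv0r // => p; rewrite hE0.
  have hkm' : (k < m)%N by rewrite /m; move: hkm; rewrite /m; lia.
  have h1 := IH x k ltac:(rewrite /m in hkm'; lia) hx ltac:(rewrite /m in hkm'; lia).
  have h2 := IH k k ltac:(rewrite /m in hkm'; lia) ltac:(rewrite /m in hkm'; lia) ltac:(rewrite /m in hkm'; lia).
  have h3 := IH k s ltac:(rewrite /m in hkm'; lia) ltac:(rewrite /m in hkm'; lia) hs.
  apply: conv_comm => p; last by case: h3 => _ [].
  apply: conv_comm => q; first by case: h1.
  by case: h2 => _ [_ /(_ erefl)].
have hmain : forall N, comm c (conv (conv (F x m) (G m)) (E m s) N).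
  move=> N; have := hc x s hx hs N; rewrite hT; try lia.
  move/commE; rewrite mulr_sumr mulr_suml -sumrB (@sum_only _ n m).
  - by move/commE.
  - rewrite /m; lia.
  - by move=> k hk hkm; apply/commE; apply: hterm.
have [hxs|hxs|hxs] := ltngtP x s.
-
  have em : m = x by rewrite /m; lia.
  rewrite em in hmain.
  have hGx : forall N, comm c (G x N).
    by case: (IH x x ltac:(lia) hx hx) => _ [_ /(_ erefl)].
  have [u [hu1 hu2]] := hG x ltac:(lia).
  split; first by move=> N; rewrite hF0.
  split; last by lia.
  have H0 : forall N, conv (G x) (fun p => c * E x s p - E x s p * c) N = 0.
    move=> N; have := hmain N; move/commE.
    rewrite conv_der (@conv0l _ (fun p => _)) ?add0r; last first.
      move=> p; apply/commE; rewrite (conv_ext _ _ (b' := G x) (a' := dl B)) //.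
        by rewrite conv_dl; apply: hGx.
    move=> <-; apply: conv_ext => // p; by rewrite (conv_ext _ _ (a' := dl B) (b' := G x)) // conv_dl.
  by move=> N; apply/commE; apply: (conv_cancel_l hu1 H0).
-
  have em : m = s by rewrite /m; lia.
  rewrite em in hmain.
  have hGs : forall N, comm c (G s N).
    by case: (IH s s ltac:(lia) hs hs) => _ [_ /(_ erefl)].
  have [u [hu1 hu2]] := hG s ltac:(lia).
  split; last by split; [move=> N; rewrite hE0|lia].
  have H0 : forall N, conv (fun p => c * F x s p - F x s p * c) (G s) N = 0.
    move=> N; have := hmain N; rewrite (conv_ext _ _ (a' := conv (F x s) (G s)) (b' := dl B)) // conv_dr.
    move/commE; rewrite conv_der (@conv0r _ (F x s) (fun p => c * G s p - G s p * c)) ?addr0 //.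
    move=> p; apply/commE; exact: hGs.
  by move=> N; apply/commE; apply: (conv_cancel_r hu2 H0).
-
  subst s; have em : m = x by rewrite /m minnn.
  rewrite em in hmain.
  split; first by move=> N; rewrite hFd.
  split; first by move=> N; rewrite hEd.
  move=> _ N; have := hmain N.
  rewrite (conv_ext _ _ (a' := conv (F x x) (G x)) (b' := dl B)) // conv_dr.
  by rewrite (conv_ext _ _ (a' := dl B) (b' := G x)) // conv_dl.
Qed.


Set Implicit Arguments. Unset Strict Implicit. Unset Printing Implicit Defensive.

Lemma stepDE (B : algType Kv) n i (T F E : nat -> nat -> nat -> B) (G : nat -> nat -> B) (c : B) (l kap : Kv) :
  (forall x s, (1 <= x <= n)%N -> (1 <= s <= n)%N -> forall N,
     T x s N = \sum_(1 <= k < n.+1) conv (conv (F x k) (G k)) (E k s) N) ->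
  (forall x N, F x x N = dl B N) -> (forall x k N, (x < k)%N -> F x k N = 0) ->
  (forall k, (1 <= k <= n)%N -> exists u, u * G k 0%N = 1 /\ G k 0%N * u = 1) ->
  (i < n)%N ->
  (forall x k, (1 <= k)%N -> (k <= x)%N -> (x < i)%N -> forall N, comm c (F x k N) /\ comm c (G k N)) ->
  (forall x, (1 <= x < i)%N -> forall N, c * T x i N - l *: (T x i N * c) = kap *: T x i.+1 N) ->
  forall x, (1 <= x < i)%N -> forall N, c * E x i N - l *: (E x i N * c) = kap *: E x i.+1 N.
Proof.
move=> hT hFd hF0 hG hi hc hrel.
pose Y k N := c * E k i N - l *: (E k i N * c) - kap *: E k i.+1 N.
suff: forall x, (1 <= x < i)%N -> forall N, Y x N = 0.
  by move=> H x hx N; apply/eqP; rewrite -subr_eq0; apply/eqP; apply: H.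
have hsum : forall x, (1 <= x < i)%N -> forall N,
    \sum_(1 <= k < n.+1) conv (conv (F x k) (G k)) (Y k) N = 0.
  move=> x hx N; have := hrel x hx N.
  rewrite !hT; try lia.
  rewrite mulr_sumr mulr_suml scaler_sumr scaler_sumr -sumrB.
  move/eqP; rewrite -subr_eq0 -sumrB => /eqP HH; rewrite -[X in _ = X]HH.
  apply: eq_big_nat => k hk.
  have [hkx|hkx] := leqP k x.
    rewrite conv_opl; last first.
      move=> p; apply: conv_comm => q.
        by case: (hc x k ltac:(lia) hkx ltac:(lia) q).
        by case: (hc x k ltac:(lia) hkx ltac:(lia) q).
    by rewrite convZ_r convB_r.
  have h0 : forall s, conv (conv (F x k) (G k)) s N = 0.
    by move=> s; rewrite conv0l // => p; rewrite conv0l // => q; exact: hF0.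
  by rewrite !h0 mulr0 mul0r !scaler0 !subr0.
move=> x; elim: x {-2}x (leqnn x) => [|M IH] x hxM hx; first by lia.
have [u [hu1 hu2]] := hG x ltac:(lia).
apply: (conv_cancel_l hu1) => N.
have := hsum x hx N.
rewrite (@sum_only _ n x); [|lia|].
  have e1 : forall p, conv (F x x) (G x) p = G x p.
    by move=> p; rewrite (conv_ext _ _ (a' := dl B) (b' := G x)) // conv_dl.
  by rewrite (conv_ext _ _ (a' := G x) (b' := Y x)).
move=> k hk hkx; have [hlt|hlt] := ltnP x k.
  rewrite conv0l // => p; rewrite conv0l // => q; exact: hF0.
rewrite conv0r // => p; apply: IH; lia.
Qed.

Lemma stepDF (B : algType Kv) n i (T F E : nat -> nat -> nat -> B) (G : nat -> nat -> B) (c : B) (l kap : Kv) :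
  (forall x s, (1 <= x <= n)%N -> (1 <= s <= n)%N -> forall N,
     T x s N = \sum_(1 <= k < n.+1) conv (conv (F x k) (G k)) (E k s) N) ->
  (forall x N, E x x N = dl B N) -> (forall k s N, (s < k)%N -> E k s N = 0) ->
  (forall k, (1 <= k <= n)%N -> exists u, u * G k 0%N = 1 /\ G k 0%N * u = 1) ->
  (i < n)%N ->
  (forall s k, (1 <= k)%N -> (k <= s)%N -> (s < i)%N -> forall N, comm c (E k s N) /\ comm c (G k N)) ->
  (forall s, (1 <= s < i)%N -> forall N, T i s N * c - l *: (c * T i s N) = kap *: T i.+1 s N) ->
  forall s, (1 <= s < i)%N -> forall N, F i s N * c - l *: (c * F i s N) = kap *: F i.+1 s N.
Proof.
move=> hT hEd hE0 hG hi hc hrel.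
pose Y k N := F i k N * c - l *: (c * F i k N) - kap *: F i.+1 k N.
suff: forall s, (1 <= s < i)%N -> forall N, Y s N = 0.
  by move=> H x hx N; apply/eqP; rewrite -subr_eq0; apply/eqP; apply: H.
have hsum : forall s, (1 <= s < i)%N -> forall N,
    \sum_(1 <= k < n.+1) conv (conv (Y k) (G k)) (E k s) N = 0.
  move=> s hs N; have := hrel s hs N.
  rewrite !hT; try lia.
  rewrite mulr_sumr mulr_suml scaler_sumr scaler_sumr -sumrB.
  move/eqP; rewrite -subr_eq0 -sumrB => /eqP HH; rewrite -[X in _ = X]HH.
  apply: eq_big_nat => k hk.
  have [hks|hks] := leqP k s.
    rewrite conv_opr; last first.
      by move=> p; case: (hc s k ltac:(lia) hks ltac:(lia) p).
    rewrite convZ_l convB_l; apply: conv_ext => // p.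
    rewrite conv_opr; last first.
      by move=> q; case: (hc s k ltac:(lia) hks ltac:(lia) q).
    by rewrite convZ_l convB_l.
  have h0 : forall a, conv a (E k s) N = 0.
    by move=> a; rewrite conv0r // => p; exact: hE0.
  by rewrite !h0 mulr0 mul0r !scaler0 !subr0.
move=> s; elim: s {-2}s (leqnn s) => [|M IH] s hsM hs; first by lia.
have [u [hu1 hu2]] := hG s ltac:(lia).
apply: (conv_cancel_r hu2) => N.
have := hsum s hs N.
rewrite (@sum_only _ n s); [|lia|].
  by rewrite (conv_ext _ _ (a' := conv (Y s) (G s)) (b' := dl B)) // conv_dr.
move=> k hk hks; have [hlt|hlt] := ltnP s k.
  rewrite conv0r // => p; exact: hE0.
rewrite conv0l // => p; rewrite conv0l // => q; apply: IH; lia.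
Qed.


Set Implicit Arguments. Unset Strict Implicit. Unset Printing Implicit Defensive.

Ltac suppt hm := repeat (case: ifP => //; let h := fresh in move=> h; try (exfalso; lia));
  try (rewrite (_ : (_ == 0) = false); [by []|apply/negbTE/eqP; lia]).

Lemma supp_F (B : algType Kv) pm (ff : nat -> nat -> int -> B) x k : supp pm (Fmat_coef pm ff x k).
Proof. move=> m hm; rewrite /Fmat_coef /ft_coef; case: pm hm => hm; suppt hm. Qed.
Lemma supp_E (B : algType Kv) pm (ee : nat -> nat -> int -> B) x k : supp pm (Emat_coef pm ee x k).
Proof. move=> m hm; rewrite /Emat_coef /et_coef; case: pm hm => hm; suppt hm. Qed.
Lemma supp_G (B : algType Kv) pm (gp gm : nat -> nat -> B) k : supp pm (gt_coef pm gp gm k).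
Proof. move=> m hm; rewrite /gt_coef; case: pm hm => hm; suppt hm. Qed.

Lemma gauss_ser (B : algType Kv) n tp tm (ee ff : nat -> nat -> int -> B) gp gm :
  gauss_decomp n tp tm ee ff gp gm -> forall pm x s, (1 <= x <= n)%N -> (1 <= s <= n)%N ->
  forall N, ser pm (T_coef pm tp tm x s) N =
   \sum_(1 <= k < n.+1) conv (conv (ser pm (Fmat_coef pm ff x k)) (ser pm (gt_coef pm gp gm k)))
                              (ser pm (Emat_coef pm ee k s)) N.
Proof.
move=> Hg pm x s hx hs N; rewrite {1}/ser Hg //; apply: eq_bigr => k _.
rewrite sconv_ser; [|apply: supp_sconv; [apply: supp_F|apply: supp_G]|apply: supp_E].
apply: conv_ext => // p.
by rewrite /ser sconv_ser //; [apply: supp_F|apply: supp_G].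
Qed.

Lemma F_d (B : algType Kv) pm (ff : nat -> nat -> int -> B) x N :
  ser pm (Fmat_coef pm ff x x) N = dl B N.
Proof. by rewrite /ser /Fmat_coef eqxx /dl /idx; case: pm; case: N. Qed.
Lemma E_d (B : algType Kv) pm (ee : nat -> nat -> int -> B) x N :
  ser pm (Emat_coef pm ee x x) N = dl B N.
Proof. by rewrite /ser /Emat_coef eqxx /dl /idx; case: pm; case: N. Qed.
Lemma F_0 (B : algType Kv) pm (ff : nat -> nat -> int -> B) x k N :
  (x < k)%N -> ser pm (Fmat_coef pm ff x k) N = 0.
Proof.
move=> h; have h1 : (x == k) = false by rewrite ltn_eqF.
have h2 : (k < x)%N = false by rewrite ltnNge ltnW.
by rewrite /ser /Fmat_coef h1 h2.
Qed.
Lemma E_0 (B : algType Kv) pm (ee : nat -> nat -> int -> B) k s N :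
  (s < k)%N -> ser pm (Emat_coef pm ee k s) N = 0.
Proof.
move=> h; have h1 : (k == s) = false by rewrite gtn_eqF.
have h2 : (k < s)%N = false by rewrite ltnNge ltnW.
by rewrite /ser /Emat_coef h1 h2.
Qed.
Lemma E_lt (B : algType Kv) pm (ee : nat -> nat -> int -> B) k s N :
  (k < s)%N -> ser pm (Emat_coef pm ee k s) N = et_coef pm ee k s (idx pm N).
Proof.
move=> h; have h1 : (k == s) = false by rewrite ltn_eqF.
by rewrite /ser /Emat_coef h1 h.
Qed.
Lemma F_lt (B : algType Kv) pm (ff : nat -> nat -> int -> B) x k N :
  (k < x)%N -> ser pm (Fmat_coef pm ff x k) N = ft_coef pm ff x k (idx pm N).
Proof.
move=> h; have h1 : (x == k) = false by rewrite gtn_eqF.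
by rewrite /ser /Fmat_coef h1 h.
Qed.

Lemma conv_0 (B : algType Kv) (a b : nat -> B) : conv a b 0 = a 0%N * b 0%N.
Proof. by rewrite /conv big_ord_recl big_ord0 addr0. Qed.

Lemma idx0 pm : idx pm 0 = 0.
Proof. by case: pm. Qed.

Lemma gauss_diag0 (B : algType Kv) n tp tm (ee ff : nat -> nat -> int -> B) gp gm :
  gauss_decomp n tp tm ee ff gp gm -> forall pm x, (1 <= x <= n)%N ->
  T_coef pm tp tm x x 0 = gt_coef pm gp gm x 0.
Proof.
move=> Hg pm x hx; have := gauss_ser Hg pm hx hx 0.
rewrite {1}/ser idx0 => ->; rewrite (@sum_only _ n x) //.
  by rewrite !conv_0 F_d E_d /dl /= mulr1 mul1r /ser idx0.
move=> k hk hkx; rewrite !conv_0.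
have [h|h] := ltnP x k; first by rewrite F_0 // !mul0r.
have h' : (k < x)%N by move: hkx; rewrite neq_ltn; lia.
rewrite F_lt // E_lt // idx0 /ft_coef /et_coef; case: pm; rewrite ltxx ?mul0r ?mulr0 //.
Qed.


Set Implicit Arguments. Unset Strict Implicit. Unset Printing Implicit Defensive.

Lemma G_units (B : algType Kv) n tp tm (ee ff : nat -> nat -> int -> B) gp gm :
  rtt_relations n tp tm -> gauss_decomp n tp tm ee ff gp gm ->
  forall pm k, (1 <= k <= n)%N ->
  exists u, u * ser pm (gt_coef pm gp gm k) 0%N = 1 /\ ser pm (gt_coef pm gp gm k) 0%N * u = 1.
Proof.
case=> H1 _ _ _ _ Hg pm k hk; rewrite /ser idx0 -(gauss_diag0 Hg) // /T_coef /=.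
case: (H1 k hk) => h1 h2.
by case: pm; [exists (tm k k 0%N)|exists (tp k k 0%N)].
Qed.

Lemma negI (B : algType Kv) (x y : B) : -1 *: x = -1 *: y -> x = y.
Proof. by rewrite !scaleN1r => /oppr_inj. Qed.

Lemma KeyE_pm (B : algType Kv) n tp tm (ee ff : nat -> nat -> int -> B) gp gm :
  rtt_relations n tp tm -> gauss_decomp n tp tm ee ff gp gm ->
  forall pm i j, (1 <= j)%N -> (j < i)%N -> (i < n)%N -> forall N,
  ee i i.+1 0 * ser pm (Emat_coef pm ee j i) N - v^-1 *: (ser pm (Emat_coef pm ee j i) N * ee i i.+1 0)
  = (v - v^-1) *: ser pm (Emat_coef pm ee j i.+1) N.
Proof.
move=> Hrtt Hg pm i j hj hji hin.
have Hu := G_units Hrtt Hg.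
case: Hrtt => H1 H2 H3 H4 H5.
set e0 := ee i i.+1 0.
set G0 := tp i i 0%N.
have [hGa hGb] := H1 i ltac:(lia).
have hG0 : G0 = gp i 0%N.
  by have := gauss_diag0 Hg true (x := i) ltac:(lia); rewrite /T_coef /gt_coef /=.
have hL : tp i i.+1 0%N = G0 * e0.
  have := gauss_ser Hg true (x := i) (s := i.+1) ltac:(lia) ltac:(lia) 0.
  rewrite {1}/ser idx0 /T_coef /= => ->.
  rewrite (@sum_only _ n i); [|lia|].
    by rewrite !conv_0 F_d E_lt // /dl /= mul1r /ser /idx /gt_coef /et_coef /= hG0.
  move=> k hk hki; rewrite !conv_0.
  have [h|h] := ltnP i k; first by rewrite F_0 // !mul0r.
  have h' : (k < i)%N by move: hki; rewrite neq_ltn; lia.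
  by rewrite F_lt // /ft_coef /idx /= !mul0r.
have HR : RTT_rel n pm true tp tm by case: pm; [exact: H3|exact: H5].
set T := fun x s => ser pm (T_coef pm tp tm x s).
have hin' : (1 <= i <= n)%N by apply/andP; split; [exact: (leq_trans hj (ltnW hji))|exact: ltnW].
have hi1 : (1 <= i.+1 <= n)%N by apply/andP; split.
have com : forall x s, (1 <= x < i)%N -> (1 <= s < i)%N -> forall N, comm e0 (T x s N).
  move=> x s hx hs N.
  have hx' : (1 <= x <= n)%N by case/andP: hx => a b; rewrite a /= (leq_trans (ltnW b) (ltnW hin)).
  have hs' : (1 <= s <= n)%N by case/andP: hs => a b; rewrite a /= (leq_trans (ltnW b) (ltnW hin)).
  have U1 := RELE HR hx' hin' hs' hi1 (idx pm N).
  have U2 := RELE HR hx' hin' hs' hin' (idx pm N).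
  have hxi : (x == i) = false by case/andP: hx => _ b; rewrite ltn_eqF.
  have hix : (i < x)%N = false by case/andP: hx => _ b; rewrite ltnNge ltnW.
  have hsi : (s == i) = false by case/andP: hs => _ b; rewrite ltn_eqF.
  have hsi1 : (s == i.+1) = false by case/andP: hs => _ b; rewrite ltn_eqF // ltnW.
  have hsi2 : (s < i.+1)%N by case/andP: hs => _ b; rewrite ltnW.
  have hsi3 : (s < i)%N by case/andP: hs.
  have [hz _] := H2 i s (proj1 (andP hs)) hsi3 (proj2 (andP hin')).
  rewrite hxi hix hsi1 hsi2 in U1.
  rewrite hxi hix hsi hsi3 in U2.
  rewrite hz mul0r scaler0 !addr0 in U1.
  rewrite hz mul0r scaler0 !addr0 in U2.
  have U1' := negI U1; have U2' := negI U2; rewrite hL -/G0 in U1'.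
  clear U1 U2; rename U1' into U1; rename U2' into U2; rewrite -/G0 in U2.
  rewrite /comm /T.
  set X := ser pm (T_coef pm tp tm x s) N.
  have -> : e0 * X = tm i i 0%N * (G0 * e0 * X) by rewrite !mulrA hGb mul1r.
  by rewrite -U1 (mulrA X) -/G0 U2 -(mulrA G0) mulrA hGb mul1r.
have rel : forall x, (1 <= x < i)%N -> forall N,
    e0 * T x i N - v^-1 *: (T x i N * e0) = (v - v^-1) *: T x i.+1 N.
  move=> x hx N.
  have hx' : (1 <= x <= n)%N by case/andP: hx => a b; rewrite a /= (leq_trans (ltnW b) (ltnW hin)).
  have U3 := RELE HR hx' hin' hin' hi1 (idx pm N).
  have U4 := RELE HR hx' hin' hin' hin' (idx pm N).
  have hxi : (x == i) = false by case/andP: hx => _ b; rewrite ltn_eqF.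
  have hix : (i < x)%N = false by case/andP: hx => _ b; rewrite ltnNge ltnW.
  have hii : (i == i.+1) = false by rewrite ltn_eqF.
  rewrite hxi hix hii ltnSn in U3.
  rewrite hxi hix eqxx ltnn in U4.
  rewrite !addr0 hL -/G0 in U3.
  rewrite !addr0 -/G0 in U4.
  rewrite /T /ser; set X := T_coef pm tp tm x i (idx pm N); set Y := T_coef pm tp tm x i.+1 (idx pm N).
  rewrite -/X -/Y in U3 U4.
  have U4' : X * G0 = v^-1 *: (G0 * X) by move: U4; rewrite scaleN1r scaleNr => /oppr_inj.
  have U3' : X * (G0 * e0) = G0 * e0 * X - (v - v^-1) *: (G0 * Y).
    by move: U3; rewrite !scaleN1r => U3; rewrite -[X * (G0 * e0)]opprK U3 opprD opprK.
  suff: G0 * (e0 * X - v^-1 *: (X * e0)) = G0 * ((v - v^-1) *: Y).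
    by move=> h; rewrite -[LHS]mul1r -hGb -mulrA h mulrA hGb mul1r.
  rewrite mulrBr -scalerAr -scalerAr !mulrA scalerAl -U4' -(mulrA X) U3'.
  by rewrite opprB addrC subrK.
have hT : forall x s, (1 <= x <= n)%N -> (1 <= s <= n)%N -> forall N,
   T x s N = \sum_(1 <= k < n.+1) conv (conv ((fun x k => ser pm (Fmat_coef pm ff x k)) x k)
     ((fun k => ser pm (gt_coef pm gp gm k)) k)) ((fun k s => ser pm (Emat_coef pm ee k s)) k s) N.
  by move=> x s hx hs N; rewrite /T (gauss_ser Hg).
have hi2 : (i <= n.+1)%N by apply: leq_trans (ltnW hin) (leqnSn n).
have hC := stepC hT (fun x N => F_d pm ff x N) (fun x k N h => F_0 pm ff N h)
   (fun x N => E_d pm ee x N) (fun k s N h => E_0 pm ee N h) (Hu pm) hi2 com.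
have hc' : forall x k, (1 <= k)%N -> (k <= x)%N -> (x < i)%N -> forall N,
    comm e0 (ser pm (Fmat_coef pm ff x k) N) /\ comm e0 (ser pm (gt_coef pm gp gm k) N).
  move=> x k hk hkx hxi N; split.
    by case: (hC x k ltac:(lia) ltac:(lia)) => h _; apply: h.
  by case: (hC k k ltac:(lia) ltac:(lia)) => _ [_ h]; apply: h.
have := stepDE (l := v^-1) (kap := v - v^-1) hT (fun x N => F_d pm ff x N) (fun x k N h => F_0 pm ff N h) (Hu pm) hin hc' rel.
move=> H N; exact: (H j ltac:(lia) N).
Qed.


Set Implicit Arguments. Unset Strict Implicit. Unset Printing Implicit Defensive.

Lemma KeyF_pm (B : algType Kv) n tp tm (ee ff : nat -> nat -> int -> B) gp gm :
  rtt_relations n tp tm -> gauss_decomp n tp tm ee ff gp gm ->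
  forall pm i j, (1 <= j)%N -> (j < i)%N -> (i < n)%N -> forall N,
  ser pm (Fmat_coef pm ff i j) N * ff i.+1 i 0 - v *: (ff i.+1 i 0 * ser pm (Fmat_coef pm ff i j) N)
  = (v^-1 - v) *: ser pm (Fmat_coef pm ff i.+1 j) N.
Proof.
move=> Hrtt Hg pm i j hj hji hin.
have Hu := G_units Hrtt Hg.
case: Hrtt => H1 H2 H3 H4 H5.
set ph := ff i.+1 i 0.
set G0 := tm i i 0%N.
have hin' : (1 <= i <= n)%N by apply/andP; split; [exact: (leq_trans hj (ltnW hji))|exact: ltnW].
have hi1 : (1 <= i.+1 <= n)%N by apply/andP; split.
have [hGa hGb] := H1 i hin'.
have hG0 : G0 = gm i 0%N.
  by have := gauss_diag0 Hg false hin'; rewrite /T_coef /gt_coef /=.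
have hL : tm i.+1 i 0%N = ph * G0.
  have := gauss_ser Hg false hi1 hin' 0.
  rewrite {1}/ser idx0 /T_coef /= => ->.
  rewrite (@sum_only _ n i) //.
    by rewrite !conv_0 F_lt // E_d /dl /= mulr1 /ser /idx /gt_coef /ft_coef /= hG0.
  move=> k hk hki; rewrite !conv_0.
  have [h|h] := ltnP i k; first by rewrite E_0 // !mulr0.
  have h' : (k < i)%N by move: hki; rewrite neq_ltn; lia.
  by rewrite E_lt // /et_coef /idx /= !mulr0.
have HR : RTT_rel n false pm tp tm by case: pm; [exact: H5|exact: H4].
set T := fun x s => ser pm (T_coef pm tp tm x s).
have com : forall x s, (1 <= x < i)%N -> (1 <= s < i)%N -> forall N, comm ph (T x s N).
  move=> y t hy ht N.
  have hy' : (1 <= y <= n)%N by case/andP: hy => a b; rewrite a /= (leq_trans (ltnW b) (ltnW hin)).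
  have ht' : (1 <= t <= n)%N by case/andP: ht => a b; rewrite a /= (leq_trans (ltnW b) (ltnW hin)).
  have V1 := RELF HR hi1 hy' hin' ht' (idx pm N).
  have V2 := RELF HR hin' hy' hin' ht' (idx pm N).
  have h1 : (i.+1 == y) = false by case/andP: hy => _ b; rewrite gtn_eqF // ltnW.
  have h2 : (y < i.+1)%N by case/andP: hy => _ b; rewrite ltnW.
  have h3 : (i == t) = false by case/andP: ht => _ b; rewrite gtn_eqF.
  have h4 : (i < t)%N = false by case/andP: ht => _ b; rewrite ltnNge ltnW.
  have h5 : (i == y) = false by case/andP: hy => _ b; rewrite gtn_eqF.
  have h6 : (y < i)%N by case/andP: hy.
  have [_ hz] := H2 i y (proj1 (andP hy)) h6 (proj2 (andP hin')).
  rewrite h1 h2 h3 h4 hz mul0r scaler0 !addr0 in V1.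
  rewrite h5 h6 h3 h4 hz mul0r scaler0 !addr0 in V2.
  have V1' := negI V1; have V2' := negI V2; rewrite hL -/G0 in V1'; rewrite -/G0 in V2'.
  clear V1 V2.
  rewrite /comm /T /ser; set X := T_coef pm tp tm y t (idx pm N); rewrite -/X in V1' V2'.
  have -> : X * ph = X * (ph * G0) * tp i i 0%N by rewrite -!mulrA hGb mulr1.
  by rewrite -V1' -(mulrA ph) V2' !mulrA -(mulrA _ G0) hGb mulr1.
have rel : forall s, (1 <= s < i)%N -> forall N,
    T i s N * ph - v *: (ph * T i s N) = (v^-1 - v) *: T i.+1 s N.
  move=> t ht N.
  have ht' : (1 <= t <= n)%N by case/andP: ht => a b; rewrite a /= (leq_trans (ltnW b) (ltnW hin)).
  have V3 := RELF HR hi1 hin' hin' ht' (idx pm N).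
  have V4 := RELF HR hin' hin' hin' ht' (idx pm N).
  have V5 := RELF HR hin' hi1 hin' ht' (idx pm N).
  have h3 : (i == t) = false by case/andP: ht => _ b; rewrite gtn_eqF.
  have h4 : (i < t)%N = false by case/andP: ht => _ b; rewrite ltnNge ltnW.
  have h7 : (i.+1 == i) = false by rewrite gtn_eqF.
  have h8 : (i == i.+1) = false by rewrite ltn_eqF.
  have h9 : (i.+1 < i)%N = false by rewrite ltnNge ltnW.
  rewrite h7 ltnSn h3 h4 !addr0 hL -/G0 in V3.
  rewrite eqxx ltnn h3 h4 !addr0 -/G0 in V4.
  rewrite h8 h9 h3 h4 !addr0 -/G0 in V5.
  rewrite /T /ser; set X := T_coef pm tp tm i t (idx pm N); set Y := T_coef pm tp tm i.+1 t (idx pm N).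
  rewrite -/X -/Y in V3 V4 V5.
  have V5' := negI V5.
  have V4a : v^-1 *: (G0 * X) = X * G0 by move: V4; rewrite scaleN1r scaleNr => /oppr_inj.
  have V4' : G0 * X = v *: (X * G0) by rewrite -V4a scalerA mulfV ?scale1r // v_neq0.
  have V3' : X * (ph * G0) = ph * G0 * X - (v - v^-1) *: (Y * G0).
    by move: V3; rewrite !scaleN1r -V5' => V3; rewrite -[X * (ph * G0)]opprK -V3 opprD opprK.
  suff: (X * ph - v *: (ph * X)) * G0 = ((v^-1 - v) *: Y) * G0.
    by move=> h; rewrite -[LHS]mulr1 -hGb mulrA h -mulrA hGb mulr1.
  rewrite mulrBl -!scalerAl -(mulrA X) V3' -(mulrA ph) V4' -scalerAr -(mulrA ph).
  by rewrite addrAC subrr add0r -scaleNr opprB.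
have hT : forall x s, (1 <= x <= n)%N -> (1 <= s <= n)%N -> forall N,
   T x s N = \sum_(1 <= k < n.+1) conv (conv ((fun x k => ser pm (Fmat_coef pm ff x k)) x k)
     ((fun k => ser pm (gt_coef pm gp gm k)) k)) ((fun k s => ser pm (Emat_coef pm ee k s)) k s) N.
  by move=> x s hx hs N; rewrite /T (gauss_ser Hg).
have hi2 : (i <= n.+1)%N by apply: leq_trans (ltnW hin) (leqnSn n).
have hC := stepC hT (fun x N => F_d pm ff x N) (fun x k N h => F_0 pm ff N h)
   (fun x N => E_d pm ee x N) (fun k s N h => E_0 pm ee N h) (Hu pm) hi2 com.
have hc' : forall s k, (1 <= k)%N -> (k <= s)%N -> (s < i)%N -> forall N,
    comm ph (ser pm (Emat_coef pm ee k s) N) /\ comm ph (ser pm (gt_coef pm gp gm k) N).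
  move=> s k hk hks hsi N; split.
    by case: (hC k s ltac:(lia) ltac:(lia)) => _ [h _]; apply: h.
  by case: (hC k k ltac:(lia) ltac:(lia)) => _ [_ h]; apply: h.
have := stepDF (l := v) (kap := v^-1 - v) hT (fun x N => E_d pm ee x N) (fun k s N h => E_0 pm ee N h) (Hu pm) hin hc' rel.
move=> H N; exact: (H j ltac:(lia) N).
Qed.


Set Implicit Arguments. Unset Strict Implicit. Unset Printing Implicit Defensive.

Lemma KeyE (B : algType Kv) n tp tm (ee ff : nat -> nat -> int -> B) gp gm :
  rtt_relations n tp tm -> gauss_decomp n tp tm ee ff gp gm ->
  forall i j (r : int), (1 <= j)%N -> (j < i)%N -> (i < n)%N ->
  ee i i.+1 0 * ee j i r - v^-1 *: (ee j i r * ee i i.+1 0) = (v - v^-1) *: ee j i.+1 r.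
Proof.
move=> Hr Hg i j r hj hji hin.
have hji1 : (j < i.+1)%N by apply: ltnW.
case: r => [N|M].
- have := KeyE_pm Hr Hg true hj hji hin N.
  by rewrite !E_lt // /et_coef /idx /= oppr_le0 opprK.
- have := KeyE_pm Hr Hg false hj hji hin M.+1.
  by rewrite !E_lt // /et_coef /idx /= NegzE.
Qed.

Lemma KeyF (B : algType Kv) n tp tm (ee ff : nat -> nat -> int -> B) gp gm :
  rtt_relations n tp tm -> gauss_decomp n tp tm ee ff gp gm ->
  forall i j (r : int), (1 <= j)%N -> (j < i)%N -> (i < n)%N ->
  ff i j r * ff i.+1 i 0 - v *: (ff i.+1 i 0 * ff i j r) = (v^-1 - v) *: ff i.+1 j r.
Proof.
move=> Hr Hg i j r hj hji hin.
have hji1 : (j < i.+1)%N by apply: ltnW.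
case: r => [[|N]|M].
- have := KeyF_pm Hr Hg false hj hji hin 0.
  by rewrite !F_lt // /ft_coef /idx /=.
- have := KeyF_pm Hr Hg true hj hji hin N.+1.
  by rewrite !F_lt // /ft_coef /idx /= opprK.
- have := KeyF_pm Hr Hg false hj hji hin M.+1.
  by rewrite !F_lt // /ft_coef /idx /= NegzE.
Qed.


Unset Implicit Arguments.
Theorem corollary3p23
  (n : nat)
  (B : algType Kv) (tp tm : nat -> nat -> nat -> B)
  (ee ff : nat -> nat -> int -> B) (gp gm : nat -> nat -> B)
  (Hrtt : rtt_relations n tp tm)
  (Hgauss : gauss_decomp n tp tm ee ff gp gm)
  (A : algType Kv) (e f : nat -> int -> A) (php phm : nat -> nat -> A)
  (Ups : {lrmorphism A -> B}) (Upsinv : B -> A)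
  (HUK : cancel Ups Upsinv) (HKU : cancel Upsinv Ups)
  (HUe : forall (i : nat), (1 <= i < n)%N -> forall (pm : bool) (m : int),
     Ups (e_half pm e i m) = (v ^ (i%:Z * m) / (v - v^-1)) *: et_coef pm ee i i.+1 m)
  (HUf : forall (i : nat), (1 <= i < n)%N -> forall (pm : bool) (m : int),
     Ups (f_half pm f i m) = (v ^ (i%:Z * m) / (v - v^-1)) *: ft_coef pm ff i.+1 i m)
  (HUphi : forall (j : nat), (1 <= j <= n)%N -> forall (pm : bool) (m : int),
     Ups (phi_half pm php phm j m) = v ^ (j%:Z * m) *: gt_coef pm gp gm j m) :
  forall (i j : nat) (r : int), (1 <= j)%N -> (j <= i)%N -> (i < n)%N ->
    Ecal e j i r = ((-1) ^+ (r < 0)%R * v ^ (- (j%:Z * r))) *: Upsinv (ee j i.+1 r) /\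
    Fcal f i j r = ((-1) ^+ (0 < r)%R * v ^ (- (j%:Z * r))) *: Upsinv (ff i.+1 j r).
Proof.
move=> i j r hj hji hin.
have kne := vv_neq0.
have UZ : forall (a : Kv) (x : A), Ups (a *: x) = a *: Ups x by move=> a x; rewrite linearZ.
have UM : forall (x y : A), Ups (x * y) = Ups x * Ups y by move=> x y; rewrite rmorphM.
have UB : forall (x y : A), Ups (x - y) = Ups x - Ups y by move=> x y; rewrite rmorphB.
have vne := v_neq0.
set k := v - v^-1.
have Ue0 : forall a, (1 <= a < n)%N -> Ups (e a 0) = k^-1 *: ee a a.+1 0.
  move=> a ha; have := HUe a ha true 0; rewrite /e_half /et_coef /= oppr0 mulr0 expr0z mul1r.
  by [].
have Uf0 : forall a, (1 <= a < n)%N -> Ups (f a 0) = (v^-1 - v)^-1 *: ff a.+1 a 0.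
  move=> a ha; have := HUf a ha false 0; rewrite /f_half /ft_coef /= oppr0 mulr0 expr0z mul1r.
  rewrite raddfN => /eqP; rewrite eqr_oppLR => /eqP ->.
  by rewrite -scaleNr; congr (_ *: _); rewrite (_ : v^-1 - v = - (v - v^-1)) ?invrN // opprB.
have UeB : Ups (k *: e j r) = ((-1) ^+ (r < 0)%R * v ^ (- (j%:Z * r))) *: ee j j.+1 r.
  have hjn : (1 <= j < n)%N by apply/andP; split => //; exact: leq_ltn_trans hji hin.
  rewrite linearZ /=.
  have [hr|hr] := leP 0 r.
  - have := HUe j hjn true (- r); rewrite /e_half /et_coef oppr_le0 hr opprK => ->.
    rewrite scalerA expr0 mul1r mulrN; congr (_ *: _).
    by rewrite /k mulrC -mulrA (mulVf kne) mulr1.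
  - have := HUe j hjn false (- r); rewrite /e_half /et_coef oppr_gt0 hr opprK raddfN => /eqP.
    rewrite eqr_oppLR => /eqP ->.
    rewrite -scaleNr scalerA expr1 mulrN; congr (_ *: _).
    rewrite mulN1r mulrN; congr (- _).
    by rewrite /k mulrC -mulrA (mulVf kne) mulr1.
have hk' : v^-1 - v = - k by rewrite /k opprB.
have hjn : (1 <= j < n)%N by apply/andP; split => //; exact: leq_ltn_trans hji hin.
have UfB : Ups ((v^-1 - v) *: f j r) = ((-1) ^+ (0 < r)%R * v ^ (- (j%:Z * r))) *: ff j.+1 j r.
  rewrite linearZ /= hk'.
  have [hr|hr] := ltP 0 r.
  - have := HUf j hjn true (- r); rewrite /f_half /ft_coef oppr_lt0 hr opprK => ->.
    rewrite scalerA expr1 mulrN; congr (_ *: _).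
    rewrite mulN1r mulNr; congr (- _).
    by rewrite /k mulrC -mulrA (mulVf kne) mulr1.
  - have := HUf j hjn false (- r); rewrite /f_half /ft_coef oppr_ge0 hr opprK raddfN => /eqP.
    rewrite eqr_oppLR => /eqP ->.
    rewrite -scaleNr scalerA expr0 mul1r mulrN mulNr opprK; congr (_ *: _).
    by rewrite [_ * - r]mulrN /k mulrC -mulrA (mulVf kne) mulr1.
set cE := (-1) ^+ (r < 0)%R * v ^ (- (j%:Z * r)).
set cF := (-1) ^+ (0 < r)%R * v ^ (- (j%:Z * r)).
have IE : forall d, (j + d < n)%N -> Ups (Ecal e j (j + d) r) = cE *: ee j (j + d).+1 r.
  elim=> [|d IH] hd.
    by rewrite addn0 /Ecal subnn /=.
  have hd' : (j + d < n)%N by rewrite addnS in hd; exact: ltnW hd.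
  have IH' := IH hd'.
  rewrite /Ecal addKn in IH'.
  have UEn : Ups (Enest e j r d) = (k^-1 * cE) *: ee j (j + d).+1 r.
    by rewrite -scalerA -IH' linearZ /= scalerA mulVf // scale1r.
  have hi' : (1 <= j + d.+1 < n)%N by apply/andP; split; [lia|exact: hd].
  have KE := KeyE Hrtt Hgauss (i := j + d.+1) (j := j) r hj ltac:(lia) hd.
  rewrite /Ecal addKn /=.
  change (Ups ((v - v^-1) *: ((e (j + d.+1)%N 0 * Enest e j r d) - v^-1 *: (Enest e j r d * e (j + d.+1)%N 0))) = cE *: ee j (j + d.+1).+1 r).
  rewrite UZ UB UM UZ UM Ue0 // UEn.
  rewrite !addnS in KE *; rewrite /k.
  set P := _ * _ in KE; set Q := _ * _ in KE.
  have hY : ee j (j + d).+2 r = (v - v^-1)^-1 *: (P - v^-1 *: Q) by rewrite KE scalerA (mulVf kne) scale1r.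
  rewrite hY -!scalerAl -!scalerAr !scalerA !scalerBr !scalerA -/P -/Q.
  clearbody P Q cE; move: kne vne; clear; move: (v - v^-1) => K hK hv.
  congr (_ *: _ - _ *: _).
  - by rewrite mulrA (mulfV hK) mul1r mulrC.
  - by rewrite mulrC (divfK hK) mulrC (mulrC K^-1).
have k'ne : v^-1 - v != 0.
  rewrite hk' oppr_eq0; exact: kne.
have IF : forall d, (j + d < n)%N -> Ups (Fcal f (j + d) j r) = cF *: ff (j + d).+1 j r.
  elim=> [|d IH] hd.
    by rewrite addn0 /Fcal subnn /=.
  have hd' : (j + d < n)%N by rewrite addnS in hd; exact: ltnW hd.
  have IH' := IH hd'.
  rewrite /Fcal addKn in IH'.
  have UFn : Ups (Fnest f j r d) = ((v^-1 - v)^-1 * cF) *: ff (j + d).+1 j r.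
    by rewrite -scalerA -IH' UZ scalerA (mulVf k'ne) scale1r.
  have hi' : (1 <= j + d.+1 < n)%N by apply/andP; split; [lia|exact: hd].
  have KF := KeyF Hrtt Hgauss (i := j + d.+1) (j := j) r hj ltac:(lia) hd.
  rewrite /Fcal addKn /=.
  change (Ups ((v^-1 - v) *: ((Fnest f j r d * f (j + d.+1)%N 0) - v *: (f (j + d.+1)%N 0 * Fnest f j r d))) = cF *: ff (j + d.+1).+1 j r).
  rewrite UZ UB UM UZ UM Uf0 // UFn.
  rewrite !addnS in KF *.
  set P := _ * _ in KF; set Q := _ * _ in KF.
  have hY : ff (j + d).+2 j r = (v^-1 - v)^-1 *: (P - v *: Q) by rewrite KF scalerA (mulVf k'ne) scale1r.
  rewrite hY -!scalerAl -!scalerAr !scalerA !scalerBr !scalerA -/P -/Q.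
  clearbody P Q cF; move: k'ne vne; clear; move: (v^-1 - v) => K hK hv.
  congr (_ *: _ - _ *: _).
  - by rewrite mulrCA (mulfV hK) mulr1 mulrC.
  - rewrite mulrA [K * (v / K)]mulrCA (mulfV hK) mulr1.
    by rewrite mulrC (mulrC K^-1).
split.
- apply: (can_inj HUK); rewrite [RHS]UZ HKU.
  by have := IE (i - j)%N; rewrite subnKC //; apply.
- apply: (can_inj HUK); rewrite [RHS]UZ HKU.
  by have := IF (i - j)%N; rewrite subnKC //; apply.
Qed.
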